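(* Let $q$ be a prime power, $n\ge2$, and let $r_1,r_2$ be positive divisors of $n$ with $\gcd(r_1,r_2)=1$. Let $\alpha=ab$ with $a\in\mathbb{F}_{q^{r_1}}^*$ and $b\in\mathbb{F}_{q^{r_2}}^*$, and consider in $\mathrm{PG}(1,q^n)$ \[L_{r_1}=\{\langle (x,\mathrm{Tr}_{q^n/q^{r_1}}(x))\rangle_{\mathbb{F}_{q^n}}\colon x\in\mathbb{F}_{q^n}^*\},\qquad L_{r_2}=\{\langle (x,\alpha\,\mathrm{Tr}_{q^n/q^{r_2}}(x))\rangle_{\mathbb{F}_{q^n}}\colon x\in\mathbb{F}_{q^n}^*\},\] with common head $H=\langle(1,0)\rangle_{\mathbb{F}_{q^n}}$. Then $L_{r_1}$ and $L_{r_2}$ share at least one point other than $H$ if and only if there exist $\gamma_1,\gamma_2\in\mathbb{F}_{q^n}$ such that $\mathrm{Tr}_{q^n/q^{r_1}}(\gamma_1)=\mathrm{Tr}_{q^n/q^{r_2}}(\gamma_2)=1$ and $\mathrm{Tr}_{q^n/q}\!\left(a\gamma_1-\frac{\gamma_2}{b}\right)=0$.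
   Context: For a divisor $r$ of $n$, $\mathrm{Tr}_{q^n/q^r}(x)=\sum_{i=0}^{n/r-1}x^{q^{ir}}$. *)

(* Defs.v *)
From HB Require Import structures.
From mathcomp Require Import all_boot all_order all_algebra all_field.
Set Implicit Arguments. Unset Strict Implicit. Unset Printing Implicit Defensive.
Import GRing.Theory.
Local Open Scope ring_scope.

Definition prime_power (q : nat) : Prop :=
  exists p k : nat, prime p /\ (0 < k)%N /\ q = (p ^ k)%N.

Definition relTr (F : fieldType) (q n r : nat) (x : F) : F :=
  \sum_(i < n %/ r) x ^+ (q ^ (i * r)).

Definition same_point (F : fieldType) (u v : F * F) : Prop :=
  u != (0, 0) /\ v != (0, 0) /\ exists lam : F, lam != 0 /\ u = (lam * v.1, lam * v.2).

(* The linear set L = { <(x, c * Tr_{q^n/q^r}(x))> : x in F^* },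
   as a predicate on representative vectors. *)
Definition in_linset (F : fieldType) (q n r : nat) (c : F) (P : F * F) : Prop :=
  exists x : F, x != 0 /\ same_point P (x, c * relTr q n r x).

(* Main.v *)
Require Import Defs.
From HB Require Import structures.
From mathcomp Require Import all_boot all_order all_algebra all_field.
From mathcomp Require Import ring.
Import GRing.Theory.
Local Open Scope ring_scope.

Lemma frob_add (F : finFieldType) (q n : nat) :
  prime_power q -> #|F| = (q ^ n)%N ->
  forall k (x y : F), (x + y) ^+ (q ^ k) = x ^+ (q ^ k) + y ^+ (q ^ k).
Proof.
move=> [p [e [pp [e0 ->]]]] cF k x y.
have pc := card_finPcharP (etrans cF (esym (expnM p e n))) pp.
apply: exprDn_pchar; rewrite -expnM pnatX pnatE //; by rewrite pc.
Qed.

Section S.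
Variables (F : finFieldType) (q n : nat).
Hypothesis Hadd : forall k (x y : F), (x + y) ^+ (q ^ k) = x ^+ (q ^ k) + y ^+ (q ^ k).
Hypothesis Hn : forall x : F, x ^+ (q ^ n) = x.
Hypothesis q_gt1 : (1 < q)%N.
Hypothesis n_gt0 : (0 < n)%N.

Lemma fr0 k : (0 : F) ^+ (q ^ k) = 0.
Proof. by rewrite expr0n expn_eq0 eqn0Ngt (ltnW q_gt1). Qed.

Lemma frN k (x : F) : (- x) ^+ (q ^ k) = - x ^+ (q ^ k).
Proof.
apply/eqP; rewrite -addr_eq0 -Hadd addrC subrr; exact/eqP/fr0.
Qed.

Lemma frB k (x y : F) : (x - y) ^+ (q ^ k) = x ^+ (q ^ k) - y ^+ (q ^ k).
Proof. by rewrite Hadd frN. Qed.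

Lemma frB1 (x y : F) : (x - y) ^+ q = x ^+ q - y ^+ q.
Proof. by have := frB 1 x y; rewrite expn1. Qed.

Lemma fr_comp k m (x : F) : (x ^+ (q ^ m)) ^+ (q ^ k) = x ^+ (q ^ (m + k)).
Proof. by rewrite -exprM -expnD. Qed.

Lemma fr_nj j (x : F) : x ^+ (q ^ (n * j)) = x.
Proof.
elim: j => [|j IH]; first by rewrite muln0 expn0 expr1.
by rewrite mulnS -fr_comp Hn IH.
Qed.

Lemma fr_sum k m (g : 'I_m -> F) :
  (\sum_(i < m) g i) ^+ (q ^ k) = \sum_(i < m) (g i) ^+ (q ^ k).
Proof.
elim/big_rec2: _ => [|i y1 y2 _ <-]; first exact: fr0.
by rewrite Hadd.
Qed.

Lemma relTrD r (x y : F) : relTr q n r (x + y) = relTr q n r x + relTr q n r y.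
Proof. by rewrite /relTr -big_split; apply: eq_bigr => i _; rewrite Hadd. Qed.

Lemma relTr0 r : relTr q n r (0 : F) = 0.
Proof. by rewrite /relTr big1 // => i _; rewrite fr0. Qed.

Lemma relTrN r (x : F) : relTr q n r (- x) = - relTr q n r x.
Proof. by rewrite /relTr -sumrN; apply: eq_bigr => i _; rewrite frN. Qed.

Lemma relTrB r (x y : F) : relTr q n r (x - y) = relTr q n r x - relTr q n r y.
Proof. by rewrite relTrD relTrN. Qed.

Lemma fix_iter r (c : F) i : c ^+ (q ^ r) = c -> c ^+ (q ^ (i * r)) = c.
Proof.
move=> hc; elim: i => [|i IH]; first by rewrite mul0n expn0 expr1.
by rewrite mulSn -fr_comp hc IH.
Qed.

Lemma relTr_fix r (c x : F) : c ^+ (q ^ r) = c -> relTr q n r (c * x) = c * relTr q n r x.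
Proof.
move=> hc; rewrite /relTr mulr_sumr; apply: eq_bigr => i _.
by rewrite exprMn fix_iter.
Qed.

Lemma relTr_frob r (u : F) : (0 < r)%N -> (r %| n)%N ->
  relTr q n r (u ^+ (q ^ r)) = relTr q n r u.
Proof.
move=> r0 rn; rewrite /relTr.
have : (0 < n %/ r)%N by rewrite divn_gt0 // dvdn_leq.
have hm : (n %/ r * r)%N = n by rewrite divnK.
case: (n %/ r)%N hm => // m hm _.
rewrite big_ord_recr big_ord_recl /=.
rewrite mul0n expn0 expr1 addrC; congr (_ + _).
  by rewrite fr_comp -mulSn hm Hn.
by apply: eq_bigr => i _; rewrite fr_comp -mulSn /bump leq0n add1n.
Qed.

Lemma relTr_fixed r (u : F) : (0 < r)%N -> (r %| n)%N ->
  (relTr q n r u) ^+ (q ^ r) = relTr q n r u.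
Proof.
move=> r0 rn; rewrite -[RHS](relTr_frob r u r0 rn) /relTr fr_sum.
by apply: eq_bigr => i _; rewrite !fr_comp addnC.
Qed.

Lemma relTr_D r (u : F) : (0 < r)%N -> (r %| n)%N ->
  relTr q n r (u ^+ (q ^ r) - u) = 0.
Proof. by move=> r0 rn; rewrite relTrB relTr_frob // subrr. Qed.


Lemma card_roots_le (p : {poly F}) (A : {set F}) :
  p != 0 -> (forall x, x \in A -> root p x) -> (#|A| < size p)%N.
Proof.
move=> p0 hA; rewrite cardE; apply: max_poly_roots => //; last exact: enum_uniq.
by apply/allP => x; rewrite mem_enum; apply: hA.
Qed.

Lemma card_K : (#|[set z : F | z ^+ q == z]| <= q)%N.
Proof.
have hs : size ('X^q - 'X : {poly F}) = q.+1.
  by rewrite size_polyDl size_polyXn // size_polyN size_polyX ltnS.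
rewrite -ltnS -hs; apply: card_roots_le; first by rewrite -size_poly_eq0 hs.
by move=> x; rewrite inE /root hornerD hornerN hornerXn hornerX subr_eq0.
Qed.

Lemma card_T0 : (#|[set d : F | relTr q n 1 d == 0%R]| <= q ^ n.-1)%N.
Proof.
pose p : {poly F} := \sum_(i < n) 'X^(q ^ i).
have hp : forall x, p.[x] = relTr q n 1 x.
  move=> x; rewrite /p horner_sum /relTr divn1; apply: eq_bigr => i _.
  by rewrite hornerXn muln1.
have hs : size p = (q ^ n.-1).+1.
  rewrite /p; case: n n_gt0 => // n' _ /=; rewrite big_ord_recr /= addrC.
  rewrite size_polyDl size_polyXn //; apply: leq_ltn_trans (size_sum _ _ _) _.
  rewrite ltnS; apply/bigmax_leqP => i _; rewrite size_polyXn ltn_exp2l //.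
rewrite -ltnS -hs; apply: card_roots_le; first by rewrite -size_poly_eq0 hs.
by move=> x; rewrite inE /root hp.
Qed.

Hypothesis cardF : #|F| = (q ^ n)%N.

Lemma hilbert90 (d : F) : relTr q n 1 d = 0 -> exists z : F, d = z ^+ (q ^ 1) - z.
Proof.
move=> hd.
pose f := fun z : F => z ^+ q - z.
pose I := f @: [set: F].
pose K := [set z : F | z ^+ q == z].
pose T0 := [set d : F | relTr q n 1 d == 0%R].
pose s := fun y => odflt 0 [pick z | f z == y].
have hsf : forall z, f (s (f z)) = f z.
  move=> z; rewrite /s; case: pickP => [z' /eqP //|/(_ z)]; by rewrite eqxx.
pose h := fun z => (f z, z - s (f z)).
have hinj : injective h.
  move=> z z' [e1 e2]; rewrite e1 in e2.
  by have := congr1 (fun t => t + s (f z')) e2; rewrite !subrK.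
have hsub : h @: [set: F] \subset setX I K.
  apply/subsetP => _ /imsetP [z _ ->]; rewrite inE /= imset_f ?inE //=.
  have e := hsf z; rewrite /f in e.
  set B := s (f z) in e *.
  apply/eqP; rewrite frB1.
  have -> : z ^+ q - B ^+ q = (z ^+ q - z) - (B ^+ q - B) + (z - B).
    by ring.
  by rewrite e subrr add0r.
have c1 := subset_leq_card hsub.
rewrite card_imset // cardsX cardsT cardF in c1.
have hIT : I \subset T0.
  apply/subsetP => _ /imsetP [z _ ->]; rewrite inE /f.
  by rewrite -{1}(expn1 q) relTr_D.
have c2 : (q ^ n.-1 <= #|I|)%N.
  rewrite -(@leq_pmul2r q) ?(ltnW q_gt1) // -expnSr prednK //.
  apply: (leq_trans c1); rewrite leq_mul2l card_K orbT //.
have eqc : #|I| = #|T0|.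
  apply/eqP; rewrite eqn_leq subset_leq_card //=; apply: leq_trans card_T0 c2.
have := subset_cardP eqc hIT => /(_ d); rewrite inE hd eqxx => /imsetP [z _ ->].
by exists z; rewrite expn1.
Qed.


Section Dec.
Variables r1 r2 : nat.
Hypotheses (r1p : (0 < r1)%N) (r2p : (0 < r2)%N) (r1n : (r1 %| n)%N) (r2n : (r2 %| n)%N)
  (cop : coprime r1 r2).

Definition inS (d : F) := exists u1 u2 : F,
  relTr q n r1 u1 = 0 /\ relTr q n r2 u2 = 0 /\ d = u1 + u2.

Lemma inS0 : inS 0.
Proof. exists 0. exists 0. split; first exact: relTr0. split; first exact: relTr0. by rewrite addr0. Qed.

Lemma inSD d e : inS d -> inS e -> inS (d + e).
Proof.
move=> [u1 [u2 [h1 [h2 ->]]]] [v1 [v2 [k1 [k2 ->]]]].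
exists (u1 + v1), (u2 + v2); rewrite !relTrD h1 h2 k1 k2 !addr0; split => //; split => //.
by rewrite addrACA.
Qed.

Lemma inSN d : inS d -> inS (- d).
Proof.
move=> [u1 [u2 [h1 [h2 ->]]]]; exists (- u1), (- u2).
by rewrite !relTrN h1 h2 oppr0 opprD.
Qed.

Definition good k := forall w : F, inS (w ^+ (q ^ k) - w).

Lemma good0 : good 0.
Proof. by move=> w; rewrite expn0 expr1 subrr; apply: inS0. Qed.

Lemma goodD k m : good k -> good m -> good (k + m).
Proof.
move=> gk gm w.
have -> : w ^+ (q ^ (k + m)) - w = ((w ^+ (q ^ m)) ^+ (q ^ k) - w ^+ (q ^ m)) + (w ^+ (q ^ m) - w).
  by rewrite fr_comp addnC addrA subrK.
by apply: inSD.
Qed.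

Lemma goodM k c : good k -> good (k * c).
Proof.
move=> gk; elim: c => [|c IH]; first by rewrite muln0; apply: good0.
by rewrite mulnS; apply: goodD.
Qed.

Lemma good1 : good 1.
Proof.
case: (egcdnP r2 r1p) => km kn h _.
rewrite (eqP cop) in h.
have g1 : good (kn * r2 + 1) by rewrite -h mulnC; apply: goodM => w; exists (w ^+ (q ^ r1) - w), 0;
  rewrite relTr_D // relTr0 addr0.
have g2 : good (kn * r2) by rewrite mulnC; apply: goodM => w; exists 0, (w ^+ (q ^ r2) - w);
  rewrite relTr_D // relTr0 add0r.
set j := (kn * r2)%N in g1 g2 *.
move=> w; pose w' := w ^+ (q ^ (n * j - j)).
have hw : w' ^+ (q ^ j) = w.
  by rewrite /w' fr_comp subnK ?fr_nj // leq_pmull.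
have e1 := g1 w'; have e2 := g2 w'.
rewrite -fr_comp hw in e1; rewrite hw in e2.
have -> : w ^+ (q ^ 1) - w = (w ^+ (q ^ 1) - w') - (w - w') by rewrite opprB addrA subrK.
by apply: inSD => //; apply: inSN.
Qed.


Lemma decomp (d : F) : relTr q n 1 d = 0 -> inS d.
Proof. by move=> /hilbert90 [z ->]; apply: good1. Qed.

End Dec.

End S.

Lemma alg_fwd (F : fieldType) (a b x y t1 t2 lam mu : F) :
  a != 0 -> b != 0 -> lam != 0 -> mu != 0 -> t2 != 0 ->
  lam * x = mu * y -> lam * t1 = mu * (a * b * t2) ->
  a * (t1^-1 * x) - y / t2 / b = 0.
Proof.
move=> a0 b0 l0 m0 t0 e1 e2.
have hx : x = mu * y / lam by rewrite -[x](mulKf l0) e1 mulrC.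
have ht : t1 = mu * (a * b * t2) / lam by rewrite -[t1](mulKf l0) e2 mulrC.
rewrite hx ht; field.
by rewrite b0 t0 l0 a0 m0.
Qed.

Lemma pair_neq0 (F : fieldType) (x : F) : (x, 1 : F) != (0, 0).
Proof. by apply/eqP; case => _ /eqP; rewrite oner_eq0. Qed.

Theorem theorem3p4 (F : finFieldType) (q n r1 r2 : nat) (a b : F) :
  prime_power q -> (2 <= n)%N -> #|F| = (q ^ n)%N ->
  (0 < r1)%N -> (0 < r2)%N -> (r1 %| n)%N -> (r2 %| n)%N -> coprime r1 r2 ->
  a != 0 -> a ^+ (q ^ r1) = a -> b != 0 -> b ^+ (q ^ r2) = b ->
  (exists P : F * F,
      in_linset q n r1 1 P /\ in_linset q n r2 (a * b) P /\ ~ same_point P (1, 0))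
  <->
  (exists g1 g2 : F, relTr q n r1 g1 = 1 /\ relTr q n r2 g2 = 1 /\
      relTr q n 1 (a * g1 - g2 / b) = 0).
Proof.
move=> pq n2 cF r1p r2p r1n r2n cop a0 ha b0 hb.
have Hadd := @frob_add F q n pq cF.
have Hn : forall x : F, x ^+ (q ^ n) = x by move=> x; rewrite -cF expf_card.
have q1 : (1 < q)%N.
  case: pq => p [e [pp [e0 ->]]].
  by apply: leq_trans (prime_gt1 pp) _; rewrite -{1}(expn1 p) leq_exp2l ?prime_gt1.
have n0 : (0 < n)%N by apply: leq_trans n2.
split.
- case=> [[P1 P2] [[x [x0 [_ [_ [lam [l0 hP]]]]]] [[y [y0 [_ [_ [mu [m0 hQ]]]]]] nH]]].
  move: hP hQ => /= [e1 e2] [f1 f2].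
  rewrite mul1r in e2.
  have t1 : relTr q n r1 x != 0.
    apply/eqP => t0; apply: nH; split; first by apply/eqP; case=> /eqP; rewrite e1 mulf_eq0 (negbTE l0) (negbTE x0).
    split; first by apply/eqP; case => /eqP; rewrite oner_eq0.
    exists (lam * x); split; first by rewrite mulf_neq0.
    by rewrite /=; rewrite e1 e2 t0 !mulr0 mulr1.
  have t2 : relTr q n r2 y != 0.
    apply/eqP => z0; move: t1; rewrite -(mulrI_eq0 _ (mulfI l0)) -e2 f2 z0 !mulr0 eqxx.
    by [].
  exists ((relTr q n r1 x)^-1 * x), (y / relTr q n r2 y).
  split; first by rewrite relTr_fix ?mulVf // exprVn relTr_fixed.
  split; first by rewrite mulrC relTr_fix ?mulVf // exprVn relTr_fixed.
  rewrite (alg_fwd _ _ _ _ _ _ _ _ _ a0 b0 l0 m0 t2 (etrans (esym e1) f1) (etrans (esym e2) f2)).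
  exact: relTr0.
- case=> g1 [g2 [h1 [h2 h3]]].
  have [u1 [u2 [k1 [k2 hd]]]] := @decomp F q n Hadd Hn q1 n0 cF r1 r2 r1p r2p r1n r2n cop _ h3.
  pose x := g1 - a^-1 * u1.
  pose y := g2 + b * u2.
  have hx : relTr q n r1 x = 1.
    by rewrite relTrB // relTr_fix ?k1 ?mulr0 ?subr0 // exprVn ha.
  have hy : relTr q n r2 y = 1.
    by rewrite relTrD // relTr_fix ?k2 ?mulr0 ?addr0.
  have hxy : y = a * b * x.
    rewrite /y /x; have e : u2 = a * g1 - g2 / b - u1 by rewrite hd addrC addKr.
    by rewrite e; field; rewrite a0 b0.
  have x0 : x != 0 by apply: contra_eq_neq hx => ->; rewrite relTr0 // eq_sym oner_neq0.
  have y0 : y != 0 by apply: contra_eq_neq hy => ->; rewrite relTr0 // eq_sym oner_neq0.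
  exists (x, 1); split; [|split].
  + exists x; split => //; split; first exact: pair_neq0.
    rewrite hx mulr1; split; first exact: pair_neq0.
    by exists 1; rewrite oner_neq0 !mul1r.
  + exists y; split => //; split; first exact: pair_neq0.
    split; first by apply/eqP; case=> /eqP; rewrite (negbTE y0).
    have ab0 : a * b != 0 by rewrite mulf_neq0.
    exists (a * b)^-1; split; first by rewrite invr_eq0.
    by rewrite /= hy mulr1 mulVf // hxy mulKf.
  + case=> _ [_ [lam [_ /= [_ /eqP]]]]; by rewrite mulr0 oner_eq0.
Qed.
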